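(* For every $\alpha\ge1$, the function $E_{\alpha}^{*}(\cdot)$ on edge streams is $2$-almost-smooth.
   Context: Let $S=(e_1,\ldots,e_k)$ be a sequence of edges on vertex set $V=[n]$. An edge $e_i=\{u,v\}$ is $\alpha$-good with respect to $S$ if $d_i(u)\le\alpha$ and $d_i(v)\le\alpha$, where $d_i(x)=|\{e_j: j>i,\ x\in e_j\}|$ is the number of edges incident to $x$ appearing after $e_i$ in $S$. Let $E_\alpha(S)$ be the set of $\alpha$-good edges of $S$ and $E_\alpha^*(S)=\max_{t\in[k]}|E_\alpha(S_t)|$, where $S_t=(e_1,\ldots,e_t)$. For disjoint consecutive segments $A,B$, $AB$ is their concatenation. A function $f$ is $2$-almost-smooth if: (1) $f(A)\ge0$ for all $A$; (2) $f(B)\le f(AB)$ for all disjoint segments $A,B$; (3) $f(A)\le\mathrm{poly}(n)$; (4) for all disjoint consecutive segments $A,B,C$ with $f(AB)\ne0$, $f(ABC)\ne0$, $\frac{f(B)}{f(AB)}\le2\cdot\frac{f(BC)}{f(ABC)}$. *)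

(* Defs.v *)
From HB Require Import structures.
From mathcomp Require Import all_boot all_order all_algebra.
Set Implicit Arguments. Unset Strict Implicit. Unset Printing Implicit Defensive.
Import Order.TTheory GRing.Theory Num.Theory.

Definition edge (n : nat) := {e : {set 'I_n} | #|e| == 2}.

Definition deg_after n (S : seq (edge n)) (i : nat) (x : 'I_n) : nat :=
  count (fun e : edge n => x \in val e) (drop i.+1 S).

(* the edge e sitting at (0-based) position i of S is alpha-good *)
Definition good_at n (alpha : nat) (S : seq (edge n)) (i : nat) (e : edge n) : bool :=
  [forall x in val e, deg_after S i x <= alpha].

Definition E_good n (alpha : nat) (S : seq (edge n)) : {set {set 'I_n}} :=
  [set e : {set 'I_n} | e \in
     [seq val ie.2 | ie <- zip (iota 0 (size S)) S & good_at alpha S ie.1 ie.2]].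

(* E*_alpha(S) = max_{t in [k]} |E_alpha(S_t)|, S_t = (e_1,...,e_t); 0 if S empty *)
Definition E_star n (alpha : nat) (S : seq (edge n)) : nat :=
  \max_(t < size S) #|E_good alpha (take t.+1 S)|.

(* c-almost-smooth for a (nat-valued, hence nonnegative) function f defined on
   edge streams over [n], for every n. Segments are arbitrary edge sequences,
   AB is concatenation. *)
Definition almost_smooth (c : rat) (f : forall n, seq (edge n) -> nat) : Prop :=
  (forall n (A : seq (edge n)), (0 <= (f n A)%:R :> rat)%R) /\
  (forall n (A B : seq (edge n)), f n B <= f n (A ++ B)) /\
  (exists a d : nat, forall n (A : seq (edge n)), f n A <= a * n ^ d) /\
  (forall n (A B C : seq (edge n)),
      f n (A ++ B) != 0 -> f n (A ++ B ++ C) != 0 ->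
      ((f n B)%:R / (f n (A ++ B))%:R <= c * ((f n (B ++ C))%:R / (f n (A ++ B ++ C))%:R) :> rat)%R).

(* Main.v *)
Require Import Defs.
From mathcomp Require Import all_boot all_order all_algebra.
From mathcomp Require Import zify.
Set Implicit Arguments. Unset Strict Implicit. Unset Printing Implicit Defensive.
Import Order.TTheory GRing.Theory Num.Theory.

Section Aux.
Variables (n alpha : nat).
Implicit Types (S X Y : seq (edge n)).

Lemma zip_shift (T : Type) (Y : seq T) m k :
  zip (iota (m + k) (size Y)) Y =
  map (fun p => (m + p.1, p.2)) (zip (iota k (size Y)) Y).
Proof.
elim: Y k => [|y Y IH] k //=.
by rewrite -addnS IH.
Qed.

Lemma good_catl X Y i x : good_at alpha (X ++ Y) i x -> good_at alpha X i x.
Proof.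
move=> /forallP H; apply/forallP => v; apply/implyP => vx.
have := H v; rewrite vx /= /deg_after => h; apply: leq_trans h.
rewrite drop_cat; case: ifP => hs; first by rewrite count_cat leq_addr.
by rewrite drop_oversize // leqNgt hs.
Qed.

Lemma good_catr X Y j x : good_at alpha (X ++ Y) (size X + j) x = good_at alpha Y j x.
Proof.
rewrite /good_at /deg_after -addnS drop_cat.
have -> : (size X + j.+1 < size X) = false by lia.
by rewrite addKn.
Qed.

Lemma zip_catE X Y :
  zip (iota 0 (size (X ++ Y))) (X ++ Y) =
  zip (iota 0 (size X)) X ++
  map (fun p => (size X + p.1, p.2)) (zip (iota 0 (size Y)) Y).
Proof.
rewrite size_cat iotaD zip_cat ?size_iota // add0n.
by have := zip_shift Y (size X) 0; rewrite addn0 => ->.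
Qed.

Lemma E_good_cat X Y : E_good alpha (X ++ Y) \subset E_good alpha X :|: E_good alpha Y.
Proof.
apply/subsetP => e; rewrite !inE => /mapP [[i x]].
rewrite mem_filter /= => /andP [g]; rewrite zip_catE mem_cat => /orP [] m ->.
  apply/orP; left; apply/mapP; exists (i, x) => //.
  by rewrite mem_filter /= m (good_catl g).
move/mapP: m => [[j y] m [ei ey]] /=; subst i x.
apply/orP; right; apply/mapP; exists (j, y) => //.
by rewrite mem_filter /= m -(good_catr X) g.
Qed.

Lemma E_good_catr X Y : E_good alpha Y \subset E_good alpha (X ++ Y).
Proof.
apply/subsetP => e; rewrite !inE => /mapP [[j y]].
rewrite mem_filter /= => /andP [g m] ->.
apply/mapP; exists (size X + j, y) => //.
rewrite mem_filter /= good_catr g zip_catE mem_cat /=.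
apply/orP; right; apply/mapP; exists (j, y) => //.
Qed.

Lemma E_good_nil : E_good alpha ([::] : seq (edge n)) = set0.
Proof. by apply/setP => e; rewrite !inE. Qed.

Lemma E_star_ge S t : t <= size S -> #|E_good alpha (take t S)| <= E_star alpha S.
Proof.
case: t => [|t] ht.
  by rewrite take0 E_good_nil cards0.
rewrite /E_star.
exact: (@leq_bigmax _ (fun i : 'I_(size S) => #|E_good alpha (take i.+1 S)|) (Ordinal ht)).
Qed.

Lemma E_star_prefix X Y : E_star alpha X <= E_star alpha (X ++ Y).
Proof.
apply/bigmax_leqP => i _.
have hi := ltn_ord i.
have -> : take i.+1 X = take i.+1 (X ++ Y).
  rewrite take_cat; case: ifP => // h.
  rewrite (_ : i.+1 - size X = 0) ?take0 ?cats0 ?take_oversize //; lia.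
apply: E_star_ge; rewrite size_cat; lia.
Qed.

Lemma E_star_suffix X Y : E_star alpha Y <= E_star alpha (X ++ Y).
Proof.
apply/bigmax_leqP => i _.
have hi := ltn_ord i.
apply: leq_trans (subset_leq_card (E_good_catr X _)) _.
have -> : X ++ take i.+1 Y = take (size X + i.+1) (X ++ Y).
  by rewrite take_cat ltnNge leq_addr /= addKn.
apply: E_star_ge; rewrite size_cat; lia.
Qed.

Lemma E_star_sub X Y : E_star alpha (X ++ Y) <= E_star alpha X + E_star alpha Y.
Proof.
apply/bigmax_leqP => i _.
have hi := ltn_ord i.
rewrite take_cat; case: ifP => hx.
  by apply: leq_trans (E_star_ge (t:=i.+1) _) (leq_addr _ _); lia.
apply: leq_trans (subset_leq_card (E_good_cat _ _)) _.
apply: leq_trans (leq_card_setU _ _) _.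
apply: leq_add.
  by rewrite -{1}(take_size X); apply: E_star_ge.
have hi' : i < size X + size Y by rewrite -size_cat.
apply: E_star_ge; lia.
Qed.

Lemma E_good_bound S : #|E_good alpha S| <= n ^ 2.
Proof.
have sub : E_good alpha S \subset [set A : {set 'I_n} | #|A| == 2].
  apply/subsetP => e; rewrite !inE => /mapP [[i x] _ ->].
  exact: (valP x).
apply: leq_trans (subset_leq_card sub) _.
rewrite card_draws card_ord bin2.
rewrite leq_half_double; nia.
Qed.

End Aux.

Theorem lemma3p3 (alpha : nat) :
  1 <= alpha -> almost_smooth 2%R (fun n => @E_star n alpha).
Proof.
move=> _; split; [|split; [|split]].
- by move=> n A; rewrite ler0n.
- by move=> n A B; apply: E_star_suffix.
- exists 1, 2 => n A; rewrite mul1n.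
  by apply/bigmax_leqP => i _; apply: E_good_bound.
- move=> n A B C hAB hABC.
  set b := E_star alpha B; set ab := E_star alpha (A ++ B).
  set bc := E_star alpha (B ++ C); set abc := E_star alpha (A ++ B ++ C).
  have h1 : b <= ab by apply: E_star_suffix.
  have h2 : b <= bc by apply: E_star_prefix.
  have h3 : E_star alpha C <= bc by apply: E_star_suffix.
  have h4 : abc <= ab + E_star alpha C by rewrite /abc catA; apply: E_star_sub.
  have key : b * abc <= 2 * bc * ab.
    apply: (leq_trans (leq_mul (leqnn b) h4)).
    rewrite mulnDr.
    have : b * ab <= bc * ab by apply: leq_mul.
    have : b * E_star alpha C <= ab * bc by apply: leq_mul.
    lia.
  have pab : (0 < (ab%:R : rat))%R by rewrite ltr0n lt0n.
  have pabc : (0 < (abc%:R : rat))%R by rewrite ltr0n lt0n.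
  rewrite ler_pdivrMr // mulrA mulrAC ler_pdivlMr //.
  by rewrite -!natrM ler_nat.
Qed.
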